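(* Let $G$ be a connected graph with girth at least $5$ and maximum degree $\Delta$, and suppose $G$ is not $\Delta$-regular (i.e. some vertex has degree at most $\Delta-1$). Then $\chi_D(G)\le\Delta+1$.
   Context: A $k$-coloring of $G$ is a map $\varphi:V(G)\to\{1,\dots,k\}$; it is proper if adjacent vertices get different colors, and distinguishing if the only automorphism $f$ of $G$ with $\varphi(f(v))=\varphi(v)$ for all $v$ is the identity. $\chi_D(G)$ is the smallest number of colors in a proper distinguishing coloring of $G$. *)

(* Defs.v *)
From mathcomp Require Import all_boot all_fingroup.
Set Implicit Arguments. Unset Strict Implicit. Unset Printing Implicit Defensive.

Definition simple_graph (T : finType) (e : rel T) : Prop :=
  symmetric e /\ irreflexive e.

Definition connected (T : finType) (e : rel T) : Prop :=
  forall x y : T, connect e x y.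

Definition deg (T : finType) (e : rel T) (v : T) : nat := #|[set u | e v u]|.

Definition maxdeg (T : finType) (e : rel T) : nat := \max_(v : T) deg e v.

Definition is_cycle_of_length (T : finType) (e : rel T) (n : nat) (c : seq T) : bool :=
  [&& size c == n, 3 <= n, uniq c & path.cycle e c].

(* girth at least g: no cycle of length < g (acyclic graphs have infinite girth) *)
Definition girth_ge (T : finType) (e : rel T) (g : nat) : Prop :=
  forall (n : nat) (c : seq T), is_cycle_of_length e n c -> g <= n.

Definition automorphism (T : finType) (e : rel T) (f : {perm T}) : Prop :=
  forall x y, e (f x) (f y) = e x y.

Definition proper_coloring (T : finType) (e : rel T) (k : nat) (phi : T -> 'I_k) : Prop :=
  forall x y, e x y -> phi x != phi y.

Definition distinguishing (T : finType) (e : rel T) (k : nat) (phi : T -> 'I_k) : Prop :=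
  forall f : {perm T}, automorphism e f -> (forall v, phi (f v) = phi v) -> f = 1%g.

Definition chiD_le (T : finType) (e : rel T) (k : nat) : Prop :=
  exists phi : T -> 'I_k, proper_coloring e phi /\ distinguishing e phi.

(* Main.v *)
Require Import Defs.
From mathcomp Require Import all_boot all_fingroup.
From mathcomp Require Import zify.
Set Implicit Arguments. Unset Strict Implicit. Unset Printing Implicit Defensive.

Lemma deg_le (T : finType) (e : rel T) v : deg e v <= maxdeg e.
Proof. rewrite /maxdeg; exact: (@leq_bigmax T (deg e) v). Qed.

Lemma deg_auto (T : finType) (e : rel T) (f : {perm T}) v :
  automorphism e f -> deg e (f v) = deg e v.
Proof.
move=> Hf; rewrite /deg.
have -> : [set u | e (f v) u] = f @: [set u | e v u].
  apply/setP => u; rewrite inE; apply/idP/imsetP.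
  - move=> H; exists (f^-1 u)%g; last by rewrite permKV.
    by rewrite inE -Hf permKV.
  - by case=> w; rewrite inE => H ->; rewrite Hf.
by rewrite card_imset //; apply: perm_inj.
Qed.

Lemma no_tri (T : finType) (e : rel T) a b c :
  simple_graph e -> girth_ge e 5 -> e a b -> e b c -> e c a -> False.
Proof.
move=> [Hs Hi] Hg Hab Hbc Hca.
have Hne : forall x y, e x y -> (x == y) = false.
  by move=> x y Hxy; apply/negbTE/eqP => E; move: Hxy; rewrite E Hi.
have Hac : (a == c) = false by rewrite eq_sym; apply: Hne.
have H : is_cycle_of_length e 3 [:: a; b; c].
  by rewrite /is_cycle_of_length /= !inE Hab Hbc Hca Hac (Hne _ _ Hab) (Hne _ _ Hbc).
by have := Hg _ _ H.
Qed.

Lemma no_sq (T : finType) (e : rel T) a b c d :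
  simple_graph e -> girth_ge e 5 -> e a b -> e b c -> e c d -> e d a ->
  a != c -> b != d -> False.
Proof.
move=> [Hs Hi] Hg Hab Hbc Hcd Hda Hac Hbd.
have Hne : forall x y, e x y -> (x == y) = false.
  by move=> x y Hxy; apply/negbTE/eqP => E; move: Hxy; rewrite E Hi.
have Had : (a == d) = false by rewrite eq_sym; apply: Hne.
have H : is_cycle_of_length e 4 [:: a; b; c; d].
  by rewrite /is_cycle_of_length /= !inE Hab Hbc Hcd Hda Had (Hne _ _ Hab)
    (Hne _ _ Hbc) (Hne _ _ Hcd) (negbTE Hac) (negbTE Hbd).
by have := Hg _ _ H.
Qed.

Definition fixprop (T : finType) (e : rel T) (r : T) (S : {set T})
  (c : T -> 'I_(maxdeg e).+1) : Prop :=
  forall c'' : T -> 'I_(maxdeg e).+1, (forall v, v \in S -> c'' v = c v) ->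
  (forall v, v != r -> deg e v < maxdeg e -> c'' v != ord0) ->
  forall f : {perm T}, automorphism e f -> (forall v, c'' (f v) = c'' v) ->
  forall v, v \in S -> f v = v.
Arguments fixprop {T} e r S c.

Definition good_state (T : finType) (e : rel T) (r : T) (S : {set T})
  (c : T -> 'I_(maxdeg e).+1) : Prop :=
  [/\ r \in S /\ c r = ord0,
   forall x y, x \in S -> y \in S -> e x y -> c x != c y,
   forall v, v \in S -> v != r -> deg e v < maxdeg e -> c v != ord0,
   forall v, v \in S -> v != r -> (exists2 x, x \in S & e v x) &
   fixprop e r S c].
Arguments good_state {T} e r S c.

Lemma base_state (T : finType) (e : rel T) (r : T) :
  simple_graph e -> deg e r < maxdeg e ->
  good_state e r [set r] (fun _ => ord0).
Proof.
move=> [Hs Hi] Hr; split.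
- by rewrite inE.
- by move=> x y; rewrite !inE => /eqP -> /eqP ->; rewrite Hi.
- by move=> v; rewrite inE => ->.
- by move=> v; rewrite inE => ->.
move=> c'' Hc'' Hnz f Hf Hp v; rewrite inE => /eqP ->.
apply/eqP; apply/negP => /negP Hne.
have := Hnz (f r) Hne; rewrite deg_auto // Hr Hp Hc''; last by rewrite inE. by rewrite eqxx; move/(_ isT).
Qed.

Lemma step_state (T : finType) (e : rel T) (r u : T) (S : {set T})
  (c : T -> 'I_(maxdeg e).+1) :
  simple_graph e -> girth_ge e 5 -> deg e r < maxdeg e ->
  good_state e r S c -> u \in S -> (exists w, e u w && (w \notin S)) ->
  exists S' (c' : T -> 'I_(maxdeg e).+1), good_state e r S' c' /\ #|S| < #|S'|.
Proof.
move=> Hsg Hg Hr [[HrS Hc0] Hprop Hnz0 Hanc Hfix] Hu [w0 /andP[Huw0 Hw0]].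
have [Hs Hi] := Hsg.
pose C := [set w | e u w & w \notin S].
pose F := [set w in C | [forall x in S, e w x ==> (x == u)]].
pose P := [set i : 'I_(maxdeg e).+1 | (i != ord0) && (i != c u)].
pose X w := [set x in S | e w x].
pose goodc w (i : 'I_(maxdeg e).+1) :=
  (i \notin c @: X w) && ((deg e w < maxdeg e) ==> (i != ord0)).
pose c' v := if v \in S then c v else if v \in F then
   nth ord0 (enum P) (index v (enum F)) else odflt ord0 [pick i | goodc v i].
have HCcard : #|C| < maxdeg e.
  case: (eqVneq u r) => [Eur|Hur].
    apply: leq_ltn_trans Hr; apply: subset_leq_card.
    by apply/subsetP=> w; rewrite !inE -Eur => /andP[].
  have [x HxS Hux] := Hanc u Hu Hur.
  apply: leq_trans (deg_le e u).
  rewrite /deg (cardsD1 x [set y | e u y]) inE Hux add1n ltnS.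
  apply: subset_leq_card; apply/subsetP=> w; rewrite !inE => /andP[Huw HwS].
  rewrite Huw andbT; apply/eqP => Ewx; move: HwS; by rewrite Ewx HxS.
have HFC : #|F| <= #|C|.
  by apply: subset_leq_card; apply/subsetP => w; rewrite inE => /andP[].
have HP : #|F| <= #|P|.
  have -> : P = ~: [set ord0; c u] by apply/setP => i; rewrite !inE negb_or.
  have := cardsC [set ord0; c u]; rewrite card_ord cards2.
  by case: (ord0 != c u) => /=; lia.
have HFnth : forall w, w \in F -> nth ord0 (enum P) (index w (enum F)) \in P.
  move=> w Hw; rewrite -mem_enum; apply: mem_nth.
  by rewrite -cardE; apply: leq_trans HP; rewrite cardE index_mem mem_enum.
have HFinj : forall w1 w2, w1 \in F -> w2 \in F ->
    nth ord0 (enum P) (index w1 (enum F)) = nth ord0 (enum P) (index w2 (enum F)) ->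
    w1 = w2.
  move=> w1 w2 H1 H2 /eqP; rewrite nth_uniq ?enum_uniq //; last first.
  - by rewrite -cardE; apply: leq_trans HP; rewrite cardE index_mem mem_enum.
  - by rewrite -cardE; apply: leq_trans HP; rewrite cardE index_mem mem_enum.
  move=> /eqP E.
  rewrite -(@nth_index _ w1 w1 (enum F)) ?mem_enum // E.
  by rewrite nth_index ?mem_enum.
have Hex : forall w, exists i, goodc w i.
  move=> w.
  pose B := c @: X w :|: (if deg e w < maxdeg e then [set ord0] else set0).
  have HB : #|B| <= maxdeg e.
    rewrite cardsU; apply: leq_trans (leq_subr _ _) _.
    have H1 : #|c @: X w| <= deg e w.
      apply: leq_trans (leq_imset_card _ _) _; apply: subset_leq_card.
      by apply/subsetP => x; rewrite !inE => /andP[].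
    have := deg_le e w.
    case: ltnP => Hd; rewrite ?cards1 ?cards0; lia.
  have /subsetPn [i _ HiB] : ~~ ([set: 'I_(maxdeg e).+1] \subset B).
    by apply/negP => /subset_leq_card; rewrite cardsT card_ord ltnNge HB.
  exists i; move: HiB; rewrite /goodc /B inE negb_or => /andP[-> H] /=.
  by case: ifP H => // _; rewrite inE.
have Hpick : forall w, goodc w (odflt ord0 [pick i | goodc w i]).
  move=> w; case: pickP => [i Hgi //|H]; exfalso.
  by have [i Hgi] := Hex w; rewrite H in Hgi.
have c'S : forall v, v \in S -> c' v = c v by move=> v Hv; rewrite /c' Hv.
have Hcross : forall x y, x \in S -> y \in C -> e y x -> c x != c' y.
  move=> x y HxS HyC Hyx.
  have HyS : y \notin S by move: HyC; rewrite inE => /andP[].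
  rewrite /c' (negbTE HyS); case: ifP => HyF.
    have := HyF; rewrite inE => /andP[_ /forall_inP/(_ x HxS)/implyP/(_ Hyx)/eqP ->].
    have := HFnth y; rewrite HyF => /(_ isT); rewrite inE => /andP[_].
    by rewrite eq_sym.
  have := Hpick y; rewrite /goodc => /andP[H _].
  apply: contraNneq H => <-; apply: imset_f; by rewrite inE HxS.
exists (S :|: C), c'; split; last first.
  apply: proper_card; apply/properP; split; first exact: subsetUl.
  by exists w0; rewrite // !inE Huw0 Hw0 orbT.
split.
- by rewrite inE HrS c'S.
- move=> x y; rewrite !inE => Hx Hy Hxy.
  case: (boolP (x \in S)) => HxS; case: (boolP (y \in S)) => HyS.
  + by rewrite !c'S //; apply: Hprop.
  + rewrite c'S //; apply: Hcross => //; last by rewrite Hs.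
    by rewrite inE HyS andbT; move: Hy; rewrite (negbTE HyS) /= andbT.
  + rewrite eq_sym c'S //; apply: Hcross => //.
    by rewrite inE HxS andbT; move: Hx; rewrite (negbTE HxS) /= andbT.
  + exfalso; move: Hx Hy; rewrite (negbTE HxS) (negbTE HyS) /=.
    move=> /andP[Hux _] /andP[Huy _].
    by apply: (no_tri Hsg Hg Hux Hxy); rewrite Hs.
- move=> v; rewrite inE => Hv Hvr Hd.
  case: (boolP (v \in S)) => HvS; first by rewrite c'S //; apply: Hnz0.
  rewrite /c' (negbTE HvS); case: ifP => HvF.
    by have := HFnth v; rewrite HvF => /(_ isT); rewrite inE => /andP[].
  have := Hpick v; rewrite /goodc Hd /= => /andP[_ ->] //.
- move=> v; rewrite inE => Hv Hvr.
  case: (boolP (v \in S)) => HvS.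
    by have [x HxS Hvx] := Hanc v HvS Hvr; exists x; rewrite // inE HxS.
  exists u; first by rewrite inE Hu.
  by move: Hv; rewrite (negbTE HvS) /= inE => /andP[Huv _]; rewrite Hs.
move=> c'' Hc'' Hnz f Hf Hp v Hv.
have HfS : forall x, x \in S -> f x = x.
  apply: (Hfix c'') => // x Hx; rewrite Hc'' ?inE ?Hx //; exact: c'S.
case: (boolP (v \in S)) => HvS; first by apply: HfS.
have HvC : v \in C by move: Hv; rewrite inE (negbTE HvS).
have Huv : e u v by move: HvC; rewrite inE => /andP[].
have Hfu := HfS u Hu.
have Hufv : e u (f v) by rewrite -{1}Hfu Hf.
case: (boolP (f v \in S)) => HfvS.
  by apply: (@perm_inj _ f); rewrite HfS.
have HfvC : f v \in C by rewrite inE Hufv HfvS.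
case: (boolP (v \in F)) => HvF.
  have HfvF : f v \in F.
    rewrite inE HfvC; apply/forall_inP => x HxS; apply/implyP => Hfx.
    rewrite -(HfS x HxS) Hf in Hfx.
    by move: HvF; rewrite inE => /andP[_ /forall_inP/(_ x HxS)/implyP]; apply.
  have Hfv' : f v \in S :|: C by rewrite inE HfvC orbT.
  have := Hp v; rewrite (Hc'' v Hv) (Hc'' (f v) Hfv').
  rewrite /c' (negbTE HvS) (negbTE HfvS) HvF HfvF.
  by apply: HFinj.
have : ~~ [forall x in S, e v x ==> (x == u)].
  by apply/negP => H; rewrite inE HvC H in HvF.
move=> /forall_inPn [x HxS].
rewrite negb_imply => /andP[Hvx Hxu].
apply/eqP; apply/negP => Hne; apply: (no_sq Hsg Hg (a := v) (b := u) (c := f v) (d := x)).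
- by rewrite Hs.
- exact: Hufv.
- by have := Hf v x; rewrite (HfS x HxS) Hvx.
- by rewrite Hs.
- by rewrite eq_sym; apply/negP.
- by rewrite eq_sym.
Qed.

Lemma exit_edge (T : finType) (e : rel T) (r y : T) (S : {set T}) :
  connected e -> r \in S -> y \notin S ->
  exists2 u, u \in S & exists w, e u w && (w \notin S).
Proof.
move=> Hcon HrS HyS.
case: (boolP [exists u in S, exists w, e u w && (w \notin S)]).
  by move=> /exists_inP [u HuS /existsP [w Hw]]; exists u => //; exists w.
move=> Hno; exfalso.
have Hcl : forall p x, x \in S -> path e x p -> last x p \in S.
  elim => [//|z p IH] x HxS /= /andP[Hxz Hp]; apply: IH Hp.
  apply/negPn/negP => HzS; move/negP: Hno; apply; apply/exists_inP.
  by exists x => //; apply/existsP; exists z; rewrite Hxz HzS.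
have [p Hp Hl] := connectP (Hcon r y).
by move: HyS; rewrite Hl Hcl.
Qed.

Theorem mainTheorem7 (T : finType) (e : rel T) :
  simple_graph e -> connected e -> girth_ge e 5 ->
  (exists v : T, deg e v < maxdeg e) ->
  chiD_le e (maxdeg e).+1.
Proof.
move=> Hsg Hcon Hg [r Hr].
have Hall : forall n, n <= #|T| ->
    exists S (c : T -> 'I_(maxdeg e).+1), good_state e r S c /\ n <= #|S|.
  elim => [|n IH] Hn.
    by exists [set r], (fun _ => ord0); split; [exact: base_state|].
  have [S [c [Hst HnS]]] := IH (ltnW Hn).
  case: (ltnP n #|S|) => H; first by exists S, c.
  have /subsetPn [y _ HyS] : ~~ ([set: T] \subset S).
    apply/negP => /subset_leq_card; rewrite cardsT; lia.
  have [[HrS _] _ _ _ _] := Hst.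
  have [u HuS Hout] := exit_edge Hcon HrS HyS.
  have [S' [c' [Hst' Hlt]]] := step_state Hsg Hg Hr Hst HuS Hout.
  by exists S', c'; split => //; lia.
have [S [c [[[HrS Hc0] Hprop Hnz _ Hfix] HS]]] := Hall #|T| (leqnn _).
have HST : forall v, v \in S.
  have /eqP -> : S == setT by rewrite eqEcard subsetT cardsT.
  by move=> v; rewrite inE.
exists c; split.
  by move=> x y Hxy; apply: Hprop.
move=> f Hf Hp; apply/permP => v; rewrite perm1.
apply: (Hfix c) => // w Hw Hd; exact: Hnz.
Qed.
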